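(* Let $A$ be a unital commutative Banach algebra, $X$ a compact Hausdorff space, and $f:X\to A$ a continuous function. If $f(X)$ generates $A$, then the map $\Phi:\mathfrak{M}(A)\to \vec{\mathrm{sp}}(f)$, $\phi\mapsto\phi\circ f$, is a homeomorphism.
   Context: $\mathfrak{M}(A)$ denotes the character space of $A$ (nonzero multiplicative linear functionals, with the weak* topology). ''$f(X)$ generates $A$'' means that $A$ is the smallest closed subalgebra of $A$ containing $f(X)$ and the unit. The joint spectrum $\vec{\mathrm{sp}}(f)$ is the set of all functions $\lambda:X\to\mathbb{C}$ such that the ideal of $A$ generated by $\{\lambda(x)\mathbf 1-f(x):x\in X\}$ is proper; equivalently $\vec{\mathrm{sp}}(f)=\{\phi\circ f:\phi\in\mathfrak{M}(A)\}$. For continuous $f$ it is a compact subset of $C(X)$, and is given the topology of the uniform norm $\|g\|_X=\sup_{x\in X}|g(x)|$. *)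

(* Defs.v *)
From HB Require Import structures.
From mathcomp Require Import all_boot all_order all_algebra.
From mathcomp Require Import all_classical all_reals all_analysis.
From mathcomp Require Import complex.
Set Implicit Arguments. Unset Strict Implicit. Unset Printing Implicit Defensive.
Import Order.TTheory GRing.Theory Num.Theory.
Import numFieldTopology.Exports numFieldNormedType.Exports.
Local Open Scope classical_set_scope.
Local Open Scope ring_scope.

(* The complex numbers R[i] get the metric topology of their norm
   (MathComp-Analysis only declares it generically on R^o). *)
HB.instance Definition _ (R : rcfType) :=
  PseudoPointedMetric.copy R[i] (R[i])^o.

(* A (complex) Banach space A : completeNormedModType R[i] is a unital
   commutative Banach algebra for the multiplication [mul] and unit [one]
   when the following axioms hold.  (HB cannot join ComAlgebra with
   NormedModule over R[i], because of the existing NumDomain join, so the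
   algebra structure is given by explicit operations.) *)
Record is_comBanachAlg (R : realType) (A : completeNormedModType R[i])
    (mul : A -> A -> A) (one : A) : Prop := {
  ba_mulA : forall x y z, mul x (mul y z) = mul (mul x y) z ;
  ba_mulC : forall x y, mul x y = mul y x ;
  ba_mul1 : forall x, mul one x = x ;
  ba_mulDl : forall x y z, mul (x + y) z = mul x z + mul y z ;
  ba_mulZl : forall (k : R[i]) x y, mul (k *: x) y = k *: mul x y ;
  ba_normM : forall x y, `|mul x y| <= `|x| * `|y| ;
  ba_norm1 : `|one| = 1
}.

Section Defs.
Variables (R : realType) (A : completeNormedModType R[i])
  (mul : A -> A -> A) (one : A).

Definition character (phi : A -> R[i]) : Prop :=
  [/\ forall (k : R[i]) (x y : A), phi (k *: x + y) = k * phi x + phi y,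
      forall x y : A, phi (mul x y) = phi x * phi y
    & exists x : A, phi x != 0].

Definition char_space : set (A -> R[i]) := [set phi | character phi].

Definition closed_subalgebra (S : set A) : Prop :=
  [/\ S one, forall x y, S x -> S y -> S (x + y),
      forall (k : R[i]) x, S x -> S (k *: x),
      forall x y, S x -> S y -> S (mul x y)
    & closed S].

Definition generates (G : set A) : Prop :=
  forall S : set A, closed_subalgebra S -> G `<=` S -> S = setT.

Definition ideal_gen (G : set A) : set A :=
  [set a | exists s : seq (A * A),
      (forall p, p \in s -> G p.2) /\ a = \sum_(p <- s) mul p.1 p.2].

Definition joint_spectrum (X : Type) (f : X -> A) : set (X -> R[i]) :=
  [set lambda | ~ ideal_gen [set lambda x *: one - f x | x in [set: X]] one].

End Defs.

(* Main.v *)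
Require Import Defs.
From HB Require Import structures.
From mathcomp Require Import all_boot all_order all_algebra.
From mathcomp Require Import all_classical all_reals all_analysis.
From mathcomp Require Import complex.
From mathcomp Require Import ring.
Import Order.TTheory GRing.Theory Num.Theory.
Import numFieldTopology.Exports numFieldNormedType.Exports.
Local Open Scope classical_set_scope.
Local Open Scope ring_scope.
Set Implicit Arguments. Unset Strict Implicit. Unset Printing Implicit Defensive.
Section Geo.
Variable R : realType.

Lemma cpos (e : R[i]) : 0 < e -> e = ((complex.Re e)%:C)%C /\ 0 < complex.Re e.
Proof.
case: e => a b; rewrite ltcE /= => /andP[/eqP -> ha]; split => //.
Qed.

Lemma cnneg (e : R[i]) : 0 <= e -> e = ((complex.Re e)%:C)%C /\ 0 <= complex.Re e.
Proof.
case: e => a b; rewrite lecE /= => /andP[/eqP -> ha]; split => //.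
Qed.

Lemma geoC (r : R[i]) : 0 <= r -> r < 1 -> forall e, 0 < e -> exists N, r ^+ N < e.
Proof.
move=> /cnneg [-> r0] r1 e /cpos [-> e0].
move: r1; rewrite -[1]/((1%:C)%C) ltcR => r1.
have := @cvg_geometric R 1 (complex.Re r).
rewrite ger0_norm // => /(_ r1) /cvgrPdist_lt /(_ _ e0) [N _ hN].
exists N; rewrite -rmorphXn /= ltcR.
have := hN N (leqnn N); rewrite /geometric /= sub0r normrN mul1r.
by rewrite ger0_norm // exprn_ge0.
Qed.
End Geo.
Section BA.
Variables (R : realType) (A : completeNormedModType R[i]) (mul : A -> A -> A) (one : A).
Hypothesis HA : is_comBanachAlg mul one.

Lemma bmulC x y : mul x y = mul y x. Proof. exact: (ba_mulC HA). Qed.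
Lemma bmul1r x : mul one x = x. Proof. exact: (ba_mul1 HA). Qed.
Lemma bmulr1 x : mul x one = x. Proof. by rewrite bmulC bmul1r. Qed.
Lemma bmulDl x y z : mul (x + y) z = mul x z + mul y z. Proof. exact: (ba_mulDl HA). Qed.
Lemma bmulDr x y z : mul x (y + z) = mul x y + mul x z.
Proof. by rewrite bmulC bmulDl !(bmulC x). Qed.
Lemma bmulZl k x y : mul (k *: x) y = k *: mul x y. Proof. exact: (ba_mulZl HA). Qed.
Lemma bmulZr k x y : mul x (k *: y) = k *: mul x y.
Proof. by rewrite bmulC bmulZl bmulC. Qed.
Lemma bmul0l x : mul 0 x = 0.
Proof. by have := bmulZl 0 0 x; rewrite !scale0r. Qed.
Lemma bmul0r x : mul x 0 = 0. Proof. by rewrite bmulC bmul0l. Qed.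
Lemma bmulNl x y : mul (- x) y = - mul x y.
Proof. by rewrite -scaleN1r bmulZl scaleN1r. Qed.
Lemma bmulNr x y : mul x (- y) = - mul x y.
Proof. by rewrite bmulC bmulNl bmulC. Qed.
Lemma bmulBl x y z : mul (x - y) z = mul x z - mul y z.
Proof. by rewrite bmulDl bmulNl. Qed.
Lemma bmulBr x y z : mul x (y - z) = mul x y - mul x z.
Proof. by rewrite bmulDr bmulNr. Qed.
Lemma bnormM x y : `|mul x y| <= `|x| * `|y|. Proof. exact: (ba_normM HA). Qed.
Lemma bnorm1 : `|one| = 1. Proof. exact: (ba_norm1 HA). Qed.
Lemma bmulA x y z : mul x (mul y z) = mul (mul x y) z. Proof. exact: (ba_mulA HA). Qed.

Lemma bmul_suml (I : Type) (s : seq I) (F : I -> A) y :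
  mul (\sum_(i <- s) F i) y = \sum_(i <- s) mul (F i) y.
Proof.
elim: s => [|a s IH]; first by rewrite !big_nil bmul0l.
by rewrite !big_cons bmulDl IH.
Qed.

Definition pw b n := iter n (mul b) one.

Lemma norm_pw b n : `|pw b n| <= `|b| ^+ n.
Proof.
elim: n => [|n IH] /=; first by rewrite bnorm1 expr0.
rewrite exprS; apply: le_trans (bnormM _ _) _.
by apply: ler_pM => //; exact: normr_ge0.
Qed.

Definition psum b n := \sum_(k < n) pw b k.

Lemma mul_psum b n : mul (one - b) (psum b n) = one - pw b n.
Proof.
rewrite /psum; elim: n => [|n IH].
  by rewrite big_ord0 bmul0r /= subrr.
rewrite big_ord_recr /= bmulDr IH bmulBl bmul1r.
by rewrite addrA subrK.
Qed.

Lemma psum_bound b n j : `|b| <= 1 -> `|psum b (n + j) - psum b n| * (1 - `|b|) <=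
   `|b| ^+ n - `|b| ^+ (n + j).
Proof.
move=> b1; have r0 : 0 <= 1 - `|b| by rewrite subr_ge0.
elim: j => [|j IH]; first by rewrite addn0 !subrr normr0 mul0r.
rewrite addnS {1}/psum big_ord_recr /= -/(psum b (n + j)).
have h1 : `|psum b (n + j) + pw b (n + j) - psum b n| <=
   `|psum b (n + j) - psum b n| + `|pw b (n + j)| by rewrite addrAC; apply: ler_normD.
apply: le_trans (ler_wpM2r r0 h1) _.
rewrite mulrDl.
have h2 : `|pw b (n + j)| * (1 - `|b|) <= `|b| ^+ (n + j) * (1 - `|b|).
  by apply: ler_wpM2r => //; exact: norm_pw.
apply: le_trans (lerD IH h2) _.
by rewrite exprS mulrBr mulr1 addrA subrK mulrC.
Qed.

Lemma A_small0 (x : A) : (forall e : R[i], 0 < e -> `|x| < e) -> x = 0.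
Proof.
move=> h; apply/eqP; apply/negPn/negP => x0.
by have := h `|x|; rewrite normr_gt0 x0 ltxx => /(_ isT).
Qed.

Lemma seq_limA (u : nat -> A) :
  (forall e : R[i], 0 < e -> exists N, forall n, (N <= n)%N -> `|u N - u n| < e) ->
  exists l : A, u @ \oo --> l.
Proof.
move=> h.
have : @cauchy A (fmap u \oo).
  apply/cauchyP => e e0; have [N hN] := h e e0; exists (u N).
  exists N => // n /= /hN; by rewrite -ball_normE.
by move/cauchy_cvg => /cvg_ex [l hl]; exists l.
Qed.

End BA.
Section Neumann.
Variables (R : realType) (A : completeNormedModType R[i]) (mul : A -> A -> A) (one : A).
Hypothesis HA : is_comBanachAlg mul one.

Lemma neumann b : `|b| < 1 -> exists u, mul u (one - b) = one.
Proof.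
move=> b1; set r := `|b|.
have r0 : 0 <= r by exact: normr_ge0.
have r1' : r <= 1 by exact: ltW.
have r1p : 0 < 1 - r by rewrite subr_gt0.
have hc : forall e : R[i], 0 < e -> exists N, forall n, (N <= n)%N ->
    `|psum mul one b N - psum mul one b n| < e.
  move=> e e0; have e1 : 0 < e * (1 - r) by rewrite mulr_gt0.
  have [N hN] := geoC r0 b1 e1; exists N => n Nn.
  rewrite -(subnKC Nn) distrC -(ltr_pM2r r1p).
  apply: le_lt_trans (psum_bound HA N (n - N) r1') _.
  apply: le_lt_trans hN; rewrite lerBlDr lerDl; exact: exprn_ge0.
have [l hl] := seq_limA hc.
exists l; rewrite (bmulC HA).
apply/eqP; rewrite -subr_eq0; apply/eqP; apply: A_small0 => e e0.
set c := one - b.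
have c1 : 0 < `|c| + 1 by rewrite ltr_wpDl.
have e2 : 0 < e / 2 by rewrite divr_gt0.
have e3 : 0 < e / 2 / (`|c| + 1) by rewrite divr_gt0.
move/cvgrPdist_lt: hl => /(_ _ e3) [N1 _ h1].
have [N2 hN2] := geoC r0 b1 e2.
set n := maxn N1 N2.
have hn1 := h1 n (leq_maxl N1 N2).
have hn2 : r ^+ n < e / 2.
  apply: le_lt_trans hN2; apply: ler_wiXn2l => //; exact: leq_maxr.
have -> : mul c l - one = mul c (l - psum mul one b n) - pw mul one b n.
  by rewrite (bmulBr HA) mul_psum // opprB addrA addrAC addrK.
apply: le_lt_trans (ler_normB _ _) _.
rewrite [e]splitr; apply: ltr_leD.
  apply: le_lt_trans (bnormM HA _ _) _.
  apply: le_lt_trans (_ : `|c| * `|l - psum mul one b n| <= (`|c| + 1) * `|l - psum mul one b n|) _.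
    by apply: ler_wpM2r => //; rewrite lerDl.
  rewrite -(ltr_pM2l c1) in hn1.
  by rewrite [X in _ < X]mulrC divfK ?gt_eqF // mulrC in hn1.
apply: le_trans (norm_pw HA b n) _; exact: ltW.
Qed.

End Neumann.
Section Chars.
Variables (R : realType) (A : completeNormedModType R[i]) (mul : A -> A -> A) (one : A).
Hypothesis HA : is_comBanachAlg mul one.
Variable phi : A -> R[i].
Hypothesis hphi : character mul phi.

Lemma ch_lin k x y : phi (k *: x + y) = k * phi x + phi y.
Proof. by case: hphi. Qed.
Lemma ch_mul x y : phi (mul x y) = phi x * phi y.
Proof. by case: hphi. Qed.
Lemma ch_add x y : phi (x + y) = phi x + phi y.
Proof. by rewrite -[x]scale1r ch_lin mul1r scale1r. Qed.
Lemma ch0 : phi 0 = 0.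
Proof.
have := ch_add 0 0; rewrite addr0 => /eqP; rewrite -subr_eq0.
by rewrite opprD addrA subrr sub0r oppr_eq0 => /eqP.
Qed.
Lemma ch_scale k x : phi (k *: x) = k * phi x.
Proof. by rewrite -[k *: x]addr0 ch_lin ch0 addr0. Qed.
Lemma ch_opp x : phi (- x) = - phi x.
Proof. by rewrite -scaleN1r ch_scale mulN1r. Qed.
Lemma ch_sub x y : phi (x - y) = phi x - phi y.
Proof. by rewrite ch_add ch_opp. Qed.
Lemma ch_one : phi one = 1.
Proof.
case: hphi => _ _ [x hx].
apply: (mulIf hx); rewrite mul1r -ch_mul (bmul1r HA) //.
Qed.

Lemma ch_bound a : `|phi a| <= `|a|.
Proof.
rewrite real_leNgt ?normr_real //; apply/negP => h.
set c := phi a in h.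
have c0 : 0 < `|c| by apply: le_lt_trans h; exact: normr_ge0.
have cn0 : c != 0 by rewrite -normr_gt0.
have b1 : `|c^-1 *: a| < 1.
  by rewrite normrZ normfV mulrC ltr_pdivrMr // mul1r.
have [u hu] := neumann HA b1.
have := congr1 phi hu; rewrite ch_mul ch_one ch_sub ch_one ch_scale -/c mulVf //.
by rewrite subrr mulr0 => /eqP; rewrite eq_sym oner_eq0.
Qed.

End Chars.
Section Ccomplete.
Variable R : realType.
Local Open Scope complex_scope.

Lemma normC_Re (z : R[i]) : (`|complex.Re z|)%:C <= `|z|.
Proof.
rewrite normc_def lecR -sqrtr_sqr ler_wsqrtr // lerDl; exact: sqr_ge0.
Qed.

Lemma normC_Im (z : R[i]) : (`|complex.Im z|)%:C <= `|z|.
Proof.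
rewrite normc_def lecR -sqrtr_sqr ler_wsqrtr // lerDr; exact: sqr_ge0.
Qed.

Lemma normC_real (a : R) : `|a%:C| = (`|a|)%:C.
Proof. by rewrite normc_def /= expr0n addr0 sqrtr_sqr. Qed.

Lemma normC_le (z : R[i]) :
  `|z| <= (`|complex.Re z| + `|complex.Im z|)%:C.
Proof.
rewrite {1}[z]complexE; apply: le_trans (ler_normD _ _) _.
rewrite normrM normC_real normC_real rmorphD /=.
have -> : `|'i| = 1 :> R[i].
  by rewrite normc_def /= expr0n add0r expr1n sqrtr1.
by rewrite mul1r.
Qed.

Lemma R_seq_lim (v : nat -> R) :
  (forall e : R, 0 < e -> exists N, forall n, (N <= n)%N -> `|v N - v n| < e) ->
  exists l : R, forall e : R, 0 < e -> exists N, forall n, (N <= n)%N -> `|v n - l| < e.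
Proof.
move=> h.
have : @cauchy R (fmap v \oo).
  apply/cauchyP => e e0; have [N hN] := h e e0; exists (v N).
  exists N => // n /= /hN; by rewrite -ball_normE.
move/R_complete => /cvg_ex [l hl]; exists l => e e0.
move/cvgrPdist_lt: hl => /(_ _ e0) [N _ hN]; exists N => n /hN.
by rewrite distrC.
Qed.

Lemma C_complete (u : nat -> R[i]) :
  (forall e : R[i], 0 < e -> exists N, forall n, (N <= n)%N -> `|u N - u n| < e) ->
  exists l : R[i], forall e : R[i], 0 < e -> exists N, forall n, (N <= n)%N -> `|u n - l| < e.
Proof.
move=> h.
have [lr hr] : exists l : R, forall e : R, 0 < e -> exists N, forall n, (N <= n)%N ->
    `|complex.Re (u n) - l| < e.
  apply: R_seq_lim => e e0.
  have [|N hN] := h e%:C; first by rewrite ltcR.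
  exists N => n /hN hn; rewrite -ltcR; apply: le_lt_trans hn.
  by rewrite -raddfB; exact: normC_Re.
have [li hi] : exists l : R, forall e : R, 0 < e -> exists N, forall n, (N <= n)%N ->
    `|complex.Im (u n) - l| < e.
  apply: R_seq_lim => e e0.
  have [|N hN] := h e%:C; first by rewrite ltcR.
  exists N => n /hN hn; rewrite -ltcR; apply: le_lt_trans hn.
  by rewrite -raddfB; exact: normC_Im.
exists (lr +i* li) => e /cpos [-> e0].
have e2 : 0 < complex.Re e / 2 by rewrite divr_gt0.
have [N1 h1] := hr _ e2; have [N2 h2] := hi _ e2.
exists (maxn N1 N2) => n hn.
apply: le_lt_trans (normC_le _) _; rewrite ltcR /=.
rewrite [complex.Re e]splitr; apply: ltrD.
  by rewrite raddfB /=; apply: h1; apply: leq_trans hn; exact: leq_maxl.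
by rewrite raddfB /=; apply: h2; apply: leq_trans hn; exact: leq_maxr.
Qed.
End Ccomplete.
Lemma small_mul (R : numFieldType) (M x e : R) : 0 <= M -> 0 <= x -> 0 < e ->
  x < e / (M + 1) -> M * x < e.
Proof.
move=> M0 x0 e0 h.
have M1 : 0 < M + 1 by rewrite ltr_wpDl.
apply: le_lt_trans (_ : M * x <= (M + 1) * x) _.
  by apply: ler_wpM2r => //; rewrite lerDl.
by rewrite mulrC -ltr_pdivlMr.
Qed.

Lemma zid1 (V : zmodType) (x y a b : V) : x - y - (a - b) = (x - a) - (y - b).
Proof. by rewrite !opprB addrACA [in RHS]addrACA (addrC (- a)). Qed.
Lemma zid2 (V : zmodType) (x y a b : V) : x - a - (y - b) = (x - y) + (b - a).
Proof. by rewrite opprB addrACA [RHS]addrACA (addrC (-a)). Qed.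

Section Spec.
Variables (R : realType) (A : completeNormedModType R[i]) (mul : A -> A -> A) (one : A).
Hypothesis HA : is_comBanachAlg mul one.
Variables (X : Type) (f : X -> A) (lam : X -> R[i]).
Hypothesis hlam : joint_spectrum mul one f lam.

Let G := [set lam x *: one - f x | x in [set: X]].
Let I := ideal_gen mul G.

Lemma I0 : I 0.
Proof. by exists [::]; split => //; rewrite big_nil. Qed.

Lemma IG x : I (lam x *: one - f x).
Proof.
exists [:: (one, lam x *: one - f x)]; split.
  by move=> p; rewrite inE => /eqP -> /=; exists x.
by rewrite big_cons big_nil addr0 /= (bmul1r HA).
Qed.

Lemma ID y z : I y -> I z -> I (y + z).
Proof.
move=> [s1 [h1 ->]] [s2 [h2 ->]]; exists (s1 ++ s2); split; last by rewrite big_cat.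
by move=> p; rewrite mem_cat => /orP [/h1|/h2].
Qed.

Lemma IM c y : I y -> I (mul c y).
Proof.
move=> [s [h ->]]; exists [seq (mul c p.1, p.2) | p <- s]; split.
  by move=> p /mapP [q qs ->] /=; exact: h.
rewrite big_map (bmulC HA) (bmul_suml HA); apply: eq_bigr => p _ /=.
by rewrite (bmulC HA) (bmulA HA).
Qed.

Lemma IZ k y : I y -> I (k *: y).
Proof.
move=> Iy; have -> : k *: y = mul (k *: one) y by rewrite (bmulZl HA) (bmul1r HA).
exact: IM.
Qed.

Lemma one_notin_I : ~ I one.
Proof. exact: hlam. Qed.

Definition J y := forall e : R[i], 0 < e -> exists2 z, I z & `|y - z| < e.

Lemma IJ y : I y -> J y.
Proof. by move=> Iy e e0; exists y => //; rewrite subrr normr0. Qed.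

Lemma JD y z : J y -> J z -> J (y + z).
Proof.
move=> Jy Jz e e0.
have e2 : 0 < e / 2 by rewrite divr_gt0.
have [y' Iy' hy] := Jy _ e2; have [z' Iz' hz] := Jz _ e2.
exists (y' + z'); first exact: ID.
rewrite opprD addrACA; apply: le_lt_trans (ler_normD _ _) _.
by rewrite [e]splitr; apply: ltrD.
Qed.

Lemma JM c y : J y -> J (mul c y).
Proof.
move=> Jy e e0.
have c1 : 0 < `|c| + 1 by rewrite ltr_wpDl.
have [z Iz hz] := Jy _ (divr_gt0 e0 c1).
exists (mul c z); first exact: IM.
rewrite -(bmulBr HA); apply: le_lt_trans (bnormM HA _ _) _.
by apply: small_mul => //; exact: normr_ge0.
Qed.

Lemma JZ k y : J y -> J (k *: y).
Proof.
move=> Jy; have -> : k *: y = mul (k *: one) y by rewrite (bmulZl HA) (bmul1r HA).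
exact: JM.
Qed.

Lemma JN y : J y -> J (- y).
Proof. by move=> Jy; rewrite -scaleN1r; exact: JZ. Qed.

Lemma JB y z : J y -> J z -> J (y - z).
Proof. by move=> Jy Jz; apply: JD => //; exact: JN. Qed.

Lemma J_lim y : (forall e : R[i], 0 < e -> exists2 w, J w & `|y - w| < e) -> J y.
Proof.
move=> h e e0.
have e2 : 0 < e / 2 by rewrite divr_gt0.
have [w Jw hw] := h _ e2; have [z Iz hz] := Jw _ e2.
exists z => //; apply: le_lt_trans (ler_distD w _ _) _.
by rewrite [e]splitr; apply: ltrD.
Qed.

Lemma one_notin_J : ~ J one.
Proof.
move=> J1; have [z Iz hz] := J1 _ ltr01.
have [u hu] := neumann HA hz.
apply: one_notin_I; rewrite -hu subKr; exact: IM.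
Qed.

Lemma Jval_uniq k1 k2 a : J (k1 *: one - a) -> J (k2 *: one - a) -> k1 = k2.
Proof.
move=> h1 h2; apply/eqP; rewrite -subr_eq0; apply/negPn/negP => d0.
have := JB h1 h2; rewrite opprB addrA subrK -scalerBl => hd.
apply: one_notin_J; have := JZ (k1 - k2)^-1 hd.
by rewrite scalerA mulVf // scale1r.
Qed.

Lemma Jval_bound k a : J (k *: one - a) -> `|k| <= `|a|.
Proof.
move=> h; rewrite real_leNgt ?normr_real //; apply/negP => hk.
have k0 : 0 < `|k| by apply: le_lt_trans hk; exact: normr_ge0.
have kn0 : k != 0 by rewrite -normr_gt0.
have b1 : `|k^-1 *: a| < 1.
  by rewrite normrZ normfV mulrC ltr_pdivrMr // mul1r.
have [u hu] := neumann HA b1.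
apply: one_notin_J; rewrite -hu.
have -> : one - k^-1 *: a = k^-1 *: (k *: one - a).
  by rewrite scalerBr scalerA mulVf // scale1r.
by rewrite (bmulZr HA); apply: JZ; exact: JM.
Qed.

Definition Bset := [set a | exists k, J (k *: one - a)].

Lemma JB_add k1 k2 a b : J (k1 *: one - a) -> J (k2 *: one - b) ->
  J ((k1 + k2) *: one - (a + b)).
Proof. by move=> h1 h2; rewrite scalerDl opprD addrACA; exact: JD. Qed.

Lemma JB_scale k k1 a : J (k1 *: one - a) -> J ((k * k1) *: one - k *: a).
Proof. by move=> h1; rewrite -scalerA -scalerBr; exact: JZ. Qed.

Lemma JB_mul k1 k2 a b : J (k1 *: one - a) -> J (k2 *: one - b) ->
  J ((k1 * k2) *: one - mul a b).
Proof.
move=> h1 h2.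
have -> : (k1 * k2) *: one - mul a b = k1 *: (k2 *: one - b) + mul b (k1 *: one - a).
  rewrite (bmulBr HA) (bmulZr HA) (bmulr1 HA) (bmulC HA b a) scalerBr scalerA.
  by rewrite addrA subrK.
by apply: JD; [exact: JZ | exact: JM].
Qed.

Lemma JB_one : J (1 *: one - one).
Proof. by rewrite scale1r subrr; exact: IJ I0. Qed.

Lemma closure_approx (S : set A) a : closure S a ->
  forall e : R[i], 0 < e -> exists2 b, S b & `|a - b| < e.
Proof.
move=> h e e0; have [b [Sb hb]] := h _ (nbhsx_ballx a e e0).
by exists b => //; rewrite -ball_normE in hb.
Qed.

Lemma Bset_closed : closed Bset.
Proof.
move=> a cla.
set h : R[i] := 2^-1.
have h0 : 0 <= h by rewrite invr_ge0 ler0n.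
have h1 : h < 1 by rewrite invf_lt1 // ltr1n.
have hpos n : 0 < h ^+ n by rewrite exprn_gt0 // invr_gt0 ltr0n.
have hb : forall n, exists b, Bset b /\ `|a - b| < h ^+ n.
  by move=> n; have [b Bb hb] := closure_approx cla (hpos n); exists b.
have [b hb'] := choice hb.
have hk : forall n, exists k, J (k *: one - b n) by move=> n; exact: (hb' n).1.
have [kap hkap] := choice hk.
have dist n m : `|kap n - kap m| <= `|b n - b m|.
  apply: Jval_bound; rewrite scalerBl.
  have -> : kap n *: one - kap m *: one - (b n - b m) =
      (kap n *: one - b n) - (kap m *: one - b m).
    exact: zid1.
  exact: JB.
have [k hk'] : exists k : R[i], forall e : R[i], 0 < e -> exists N, forall n,
    (N <= n)%N -> `|kap n - k| < e.
  apply: C_complete => e e0.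
  have e2 : 0 < e / 2 by rewrite divr_gt0.
  have [N hN] := geoC h0 h1 e2.
  exists N => n Nn; apply: le_lt_trans (dist N n) _.
  apply: le_lt_trans (ler_distD a _ _) _.
  rewrite [e]splitr; apply: ltrD.
    by rewrite distrC; apply: lt_trans hN; exact: (hb' N).2.
  apply: le_lt_trans hN; apply: le_trans (ltW (hb' n).2) _.
  exact: (ler_wiXn2l h0 (ltW h1) Nn).
exists k; apply: J_lim => e e0.
have e2 : 0 < e / 2 by rewrite divr_gt0.
have [N1 hN1] := hk' _ e2.
have [N2 hN2] := geoC h0 h1 e2.
set n := maxn N1 N2.
exists (kap n *: one - b n); first exact: hkap.
have -> : k *: one - a - (kap n *: one - b n) = (k - kap n) *: one + (b n - a).
  by rewrite scalerBl zid2.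
apply: le_lt_trans (ler_normD _ _) _.
rewrite normrZ (bnorm1 HA) mulr1 [e]splitr; apply: ltrD.
  by rewrite distrC; apply: hN1; exact: leq_maxl.
rewrite distrC; apply: lt_le_trans (hb' n).2 _.
apply: le_trans (ltW hN2); exact: (ler_wiXn2l h0 (ltW h1) (leq_maxr N1 N2)).
Qed.

Hypothesis hgen : generates mul one [set f x | x in [set: X]].

Lemma Bset_all a : Bset a.
Proof.
have -> : Bset = setT.
  apply: hgen; last by move=> _ [x _ <-]; exists (lam x); apply: IJ; exact: IG.
  split.
  - by exists 1; exact: JB_one.
  - by move=> x y [k1 h1] [k2 h2]; exists (k1 + k2); exact: JB_add.
  - by move=> k x [k1 h1]; exists (k * k1); exact: JB_scale.
  - by move=> x y [k1 h1] [k2 h2]; exists (k1 * k2); exact: JB_mul.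
  - exact: Bset_closed.
done.
Qed.

End Spec.

Definition chi (R : realType) (A : completeNormedModType R[i]) (mul : A -> A -> A)
  (one : A) (X : Type) (f : X -> A) (lam : X -> R[i]) (a : A) : R[i] :=
  xget 0 (fun k => J mul one f lam (k *: one - a)).
Lemma small0 (K : numDomainType) (V : normedZmodType K) (x : V) :
  (forall e : K, 0 < e -> `|x| < e) -> x = 0.
Proof.
move=> h; apply/eqP; apply/negPn/negP => x0.
by have := h `|x|; rewrite normr_gt0 x0 ltxx => /(_ isT).
Qed.

Section ChiSec.
Variables (R : realType) (A : completeNormedModType R[i]) (mul : A -> A -> A) (one : A).
Hypothesis HA : is_comBanachAlg mul one.
Variables (X : Type) (f : X -> A).
Hypothesis hgen : generates mul one [set f x | x in [set: X]].

Section OneLam.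
Variable lam : X -> R[i].
Hypothesis hlam : joint_spectrum mul one f lam.

Lemma chi_spec a : J mul one f lam (chi mul one f lam a *: one - a).
Proof.
apply: (@xgetPex _ 0 (fun k => J mul one f lam (k *: one - a))).
exact: (Bset_all HA hlam hgen).
Qed.

Lemma chi_eq k a : J mul one f lam (k *: one - a) -> chi mul one f lam a = k.
Proof. by move=> h; apply: (Jval_uniq HA hlam (chi_spec a) h). Qed.

Lemma chi_char : character mul (chi mul one f lam).
Proof.
split.
- move=> k x y; apply: chi_eq; apply: JB_add; first exact: (JB_scale HA k (chi_spec x)).
  exact: chi_spec.
- by move=> x y; apply: chi_eq; apply: (JB_mul HA); exact: chi_spec.
- exists one; rewrite (chi_eq (JB_one mul one f lam)); exact: oner_neq0.
Qed.

Lemma chi_f x : chi mul one f lam (f x) = lam x.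
Proof. by apply: chi_eq; apply: IJ; exact: (IG HA). Qed.

End OneLam.

Lemma char_inj phi psi : character mul phi -> character mul psi ->
  (forall x, phi (f x) = psi (f x)) -> phi = psi.
Proof.
move=> hphi hpsi hx.
have hS : [set a | phi a = psi a] = setT.
  apply: hgen; last by move=> _ [x _ <-]; exact: hx.
  split => /=.
  - by rewrite (ch_one HA hphi) (ch_one HA hpsi).
  - by move=> x y hx' hy'; rewrite (ch_add hphi) (ch_add hpsi) hx' hy'.
  - by move=> k x hx'; rewrite (ch_scale hphi) (ch_scale hpsi) hx'.
  - by move=> x y hx' hy'; rewrite (ch_mul hphi) (ch_mul hpsi) hx' hy'.
  - move=> a cla; apply/eqP; rewrite -subr_eq0; apply/eqP; apply: small0 => e e0.
    have e2 : 0 < e / 2 by rewrite divr_gt0.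
    have [b /= hb hab] := closure_approx cla e2.
    have -> : phi a - psi a = phi (a - b) - psi (a - b).
      by rewrite (ch_sub hphi) (ch_sub hpsi) hb opprB addrA subrK.
    apply: le_lt_trans (ler_normB _ _) _.
    rewrite [e]splitr; apply: ler_ltD.
      by apply: le_trans (ch_bound HA hphi _) _; exact: ltW.
    by apply: le_lt_trans (ch_bound HA hpsi _) _.
by apply: funext => a; have : [set: A] a by []; rewrite -hS.
Qed.

End ChiSec.

Lemma ch_sum (R : realType) (A : completeNormedModType R[i]) (mul : A -> A -> A)
  (phi : A -> R[i]) (hphi : character mul phi) (I : Type) (s : seq I) (F : I -> A) :
  phi (\sum_(i <- s) F i) = \sum_(i <- s) phi (F i).
Proof.
elim: s => [|a s IH]; first by rewrite !big_nil (ch0 hphi).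
by rewrite !big_cons (ch_add hphi) IH.
Qed.

Lemma spec_of_char (R : realType) (A : completeNormedModType R[i]) (mul : A -> A -> A)
  (one : A) (HA : is_comBanachAlg mul one) (X : Type) (f : X -> A)
  (phi : A -> R[i]) : character mul phi -> joint_spectrum mul one f (phi \o f).
Proof.
move=> hphi [s [hs h1]].
have := congr1 phi h1; rewrite (ch_one HA hphi) (ch_sum hphi) big1_seq.
  by move/eqP; rewrite oner_eq0.
move=> p /andP [_ /hs [x _ <-]].
by rewrite (ch_mul hphi) (ch_sub hphi) (ch_scale hphi) (ch_one HA hphi) mulr1 subrr mulr0.
Qed.
Lemma evalc (R : realType) (A : completeNormedModType R[i]) (a : A) (phi0 : {ptws A -> R[i]}) (e : R[i]) :
  0 < e -> nbhs phi0 [set phi : {ptws A -> R[i]} | `|phi0 a - phi a| < e].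
Proof.
move=> e0.
have h := (@pointwise_cvgP A R[i] (nbhs phi0) phi0 _).1 (@cvg_id _ (nbhs phi0)) a.
have h2 := h (nbhs_filter phi0) _ (nbhsx_ballx (phi0 a) e e0).
move: h2.
rewrite nbhs_filterE.
move=> h3.
have h4 : nbhs phi0 ((fun g : {ptws A -> R[i]} => g a) @^-1` ball (phi0 a) e) := h3.
apply: filterS h4 => phi.
by [].
Qed.

Section PhiCont.
Variables (R : realType) (A : completeNormedModType R[i]) (mul : A -> A -> A) (one : A).
Hypothesis HA : is_comBanachAlg mul one.
Variables (X : topologicalType) (f : X -> A).
Hypothesis hf : continuous f.
Hypothesis hX : compact [set: X].

Lemma third (e : R[i]) : e / 3 + e / 3 + e / 3 = e.
Proof.
rewrite -!mulrDl.
have -> : e + e + e = e * 3%:R by rewrite mulr_natr !mulrS mulr0n addr0 addrA.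
by rewrite mulfK // pnatr_eq0.
Qed.

Lemma Phi_cont : {within (char_space mul : set {ptws A -> R[i]}),
  continuous ((fun phi => phi \o f) : {ptws A -> R[i]} -> {uniform X -> R[i]})}.
Proof.
apply/subspace_continuousP => phi0 hphi0 P /uniform_nbhs [E [+ sEP]].
rewrite -entourage_ballE => -[e /= e0 sE].
set F := within (char_space mul : set {ptws A -> R[i]}) (nbhs phi0).
have e3 : 0 < e / 3 by rewrite divr_gt0.
have : \forall phi \near F, [set: X] `<=`
    (fun y => `|phi0 (f y) - (phi : A -> R[i]) (f y)| < e).
  apply: ((compact_near_coveringP [set: X]).1 hX) => x _.
  exists ([set x' | `|f x - f x'| < e / 3],
          [set phi : {ptws A -> R[i]} | char_space mul phi /\
             `|phi0 (f x) - phi (f x)| < e / 3]).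
    split.
      have h1 : nbhs x (f @^-1` ball (f x) (e / 3)).
        by apply: hf; apply: nbhsx_ballx.
      by apply: filterS h1 => x' /=; rewrite -ball_normE.
    have h2 := evalc (f x) phi0 e3.
    rewrite /F /within; apply: filterS h2 => phi h hc; split => //.
  case=> x' phi /= [hx' [hc hp]].
  rewrite -[e]third.
  have -> : phi0 (f x') - phi (f x') = (phi0 (f x') - phi0 (f x)) +
     (phi0 (f x) - phi (f x)) + (phi (f x) - phi (f x')).
    by rewrite [X in _ = X + _]addrA subrK addrA subrK.
  apply: le_lt_trans (ler_normD _ _) _; apply: ltrD; last first.
    rewrite -(ch_sub hc); apply: le_lt_trans (ch_bound HA hc _) hx'.
  apply: le_lt_trans (ler_normD _ _) _; apply: ltrD => //.
  rewrite -(ch_sub hphi0); apply: le_lt_trans (ch_bound HA hphi0 _) _.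
  by rewrite distrC.
apply: filterS => phi h; apply: sEP => y _; apply: sE; exact: h.
Qed.

End PhiCont.
Section PsiCont.
Variables (R : realType) (A : completeNormedModType R[i]) (mul : A -> A -> A) (one : A).
Hypothesis HA : is_comBanachAlg mul one.
Variables (X : topologicalType) (f : X -> A).
Hypothesis hgen : generates mul one [set f x | x in [set: X]].

Let spec := joint_spectrum mul one f.
Let ch := chi mul one f.

Definition good (a : A) := forall lam0 : {uniform X -> R[i]}, spec lam0 ->
  forall e : R[i], 0 < e ->
  nbhs lam0 [set lam : {uniform X -> R[i]} | spec lam -> `|ch lam0 a - ch lam a| < e].

Lemma good_one : good one.
Proof.
move=> lam0 hl0 e e0; apply: filterE => lam hl.
rewrite /ch (chi_eq HA hgen hl0 (JB_one mul one f lam0)).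
by rewrite (chi_eq HA hgen hl (JB_one mul one f lam)) subrr normr0.
Qed.

Lemma good_f x : good (f x).
Proof.
move=> lam0 hl0 e e0.
have h : nbhs lam0 [set lam : {uniform X -> R[i]} | forall y, [set: X] y ->
    [set xy | ball xy.1 e xy.2] (lam0 y, lam y)].
  apply/uniform_nbhs; exists [set xy | ball xy.1 e xy.2]; split => //.
  exact: (entourage_ball _ (PosNum e0)).
apply: filterS h => lam h hl.
rewrite /ch (chi_f HA hgen hl0) (chi_f HA hgen hl).
exact: (h x I).
Qed.

Lemma good_add a b : good a -> good b -> good (a + b).
Proof.
move=> ga gb lam0 hl0 e e0.
have e2 : 0 < e / 2 by rewrite divr_gt0.
apply: filterS2 (ga _ hl0 _ e2) (gb _ hl0 _ e2) => lam h1 h2 hl.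
have c0 := chi_char HA hgen hl0; have c := chi_char HA hgen hl.
rewrite /ch (ch_add c0) (ch_add c) opprD addrACA.
apply: le_lt_trans (ler_normD _ _) _; rewrite [e]splitr; apply: ltrD.
  exact: h1.
exact: h2.
Qed.

Lemma good_scale k a : good a -> good (k *: a).
Proof.
move=> ga lam0 hl0 e e0.
have k1 : 0 < `|k| + 1 by rewrite ltr_wpDl.
apply: filterS (ga _ hl0 _ (divr_gt0 e0 k1)) => lam h hl.
have c0 := chi_char HA hgen hl0; have c := chi_char HA hgen hl.
rewrite /ch (ch_scale c0) (ch_scale c) -mulrBr normrM.
apply: small_mul => //; rewrite ?normr_ge0 //; exact: h.
Qed.

Lemma good_mul a b : good a -> good b -> good (mul a b).
Proof.
move=> ga gb lam0 hl0 e e0.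
set M := `|a| + `|b|.
have M0 : 0 <= M by rewrite addr_ge0.
have e2 : 0 < e / 2 by rewrite divr_gt0.
have M1 : 0 < M + 1 by rewrite ltr_wpDl.
have e3 := divr_gt0 e2 M1.
apply: filterS2 (ga _ hl0 _ e3) (gb _ hl0 _ e3) => lam h1 h2 hl.
have c0 := chi_char HA hgen hl0; have c := chi_char HA hgen hl.
rewrite /ch (ch_mul c0) (ch_mul c).
set x0 := chi mul one f lam0 a; set y0 := chi mul one f lam0 b.
set x1 := chi mul one f lam a; set y1 := chi mul one f lam b.
have -> : x0 * y0 - x1 * y1 = x0 * (y0 - y1) + (x0 - x1) * y1 by ring.
apply: le_lt_trans (ler_normD _ _) _; rewrite [e]splitr; apply: ltrD.
  rewrite normrM; apply: le_lt_trans (_ : _ <= M * `|y0 - y1|) _.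
    apply: ler_wpM2r; first exact: normr_ge0.
    apply: le_trans (ch_bound HA c0 a) _; rewrite lerDl; exact: normr_ge0.
  apply: small_mul => //; rewrite ?normr_ge0 //; exact: h2 hl.
rewrite normrM mulrC; apply: le_lt_trans (_ : _ <= M * `|x0 - x1|) _.
  apply: ler_wpM2r; first exact: normr_ge0.
  apply: le_trans (ch_bound HA c b) _; rewrite lerDr; exact: normr_ge0.
apply: small_mul => //; rewrite ?normr_ge0 //; exact: h1 hl.
Qed.

Lemma good_closed : closed good.
Proof.
move=> a cla lam0 hl0 e e0.
have e3 : 0 < e / 3 by rewrite divr_gt0.
have [b gb hab] := closure_approx cla e3.
apply: filterS (gb _ hl0 _ e3) => lam h hl.
have c0 := chi_char HA hgen hl0; have c := chi_char HA hgen hl.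
rewrite -[e]third /ch.
have -> : chi mul one f lam0 a - chi mul one f lam a =
   (chi mul one f lam0 a - chi mul one f lam0 b) +
   (chi mul one f lam0 b - chi mul one f lam b) +
   (chi mul one f lam b - chi mul one f lam a).
  by rewrite [X in _ = X + _]addrA subrK addrA subrK.
apply: le_lt_trans (ler_normD _ _) _; apply: ltrD; last first.
  rewrite -(ch_sub c); apply: le_lt_trans (ch_bound HA c _) _.
  by rewrite distrC.
apply: le_lt_trans (ler_normD _ _) _; apply: ltrD; last exact: h.
rewrite -(ch_sub c0); exact: le_lt_trans (ch_bound HA c0 _) hab.
Qed.

Lemma good_all a : good a.
Proof.
have -> : good = setT; last by [].
apply: hgen; last by move=> _ [x _ <-]; exact: good_f.
split.
- exact: good_one.
- exact: good_add.
- exact: good_scale.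
- exact: good_mul.
- exact: good_closed.
Qed.

Lemma Psi_cont : {within (joint_spectrum mul one f : set {uniform X -> R[i]}),
  continuous ((fun lam => chi mul one f lam) : {uniform X -> R[i]} -> {ptws A -> R[i]})}.
Proof.
apply/subspace_continuousP => lam0 hl0.
apply/(@pointwise_cvgP A R[i] _ (chi mul one f lam0) _).2 => a.
move=> P /nbhs_ballP [e e0 sP].
have h := good_all a hl0 e0.
have h' : within (joint_spectrum mul one f : set {uniform X -> R[i]}) (nbhs lam0)
   [set lam : {uniform X -> R[i]} | P (chi mul one f lam a)].
  rewrite /within; apply: filterS h => lam h1 h2; apply: sP; exact: h1 h2.
rewrite nbhs_filterE.
exact: h'.
Qed.

End PsiCont.
Unset Implicit Arguments.
Set Strict Implicit.

Theorem proposition3p1 (R : realType) (A : completeNormedModType R[i])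
    (mul : A -> A -> A) (one : A) (X : topologicalType) (f : X -> A) :
  is_comBanachAlg mul one ->
  hausdorff_space X -> compact [set: X] -> continuous f ->
  generates mul one [set f x | x in [set: X]] ->
  let Phi : {ptws A -> R[i]} -> {uniform X -> R[i]} := fun phi => phi \o f in
  [/\ set_bij (char_space mul) (joint_spectrum mul one f) Phi,
      {within (char_space mul : set {ptws A -> R[i]}), continuous Phi}
    & exists Psi : {uniform X -> R[i]} -> {ptws A -> R[i]},
        [/\ {in char_space mul, cancel Phi Psi},
            {in joint_spectrum mul one f, cancel Psi Phi}
          & {within (joint_spectrum mul one f : set {uniform X -> R[i]}),
              continuous Psi}]].
Proof.
move=> HA _ hX hf hgen Phi.
split.
- split.
  + by move=> phi hphi; exact: (spec_of_char HA hphi).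
  + move=> phi psi; rewrite !inE => hphi hpsi heq.
    apply: (char_inj HA hgen hphi hpsi) => x.
    by have := congr1 (fun g => g x) heq.
  + move=> lam hl; exists (chi mul one f lam); first exact: (chi_char HA hgen hl).
    by apply: funext => x; exact: (chi_f HA hgen hl).
- exact: (Phi_cont HA hf hX).
- exists (fun lam => chi mul one f lam); split.
  + move=> phi; rewrite inE => hphi.
    apply: (char_inj HA hgen (chi_char HA hgen (spec_of_char HA hphi)) hphi) => x.
    exact: (chi_f HA hgen (spec_of_char HA hphi)).
  + move=> lam; rewrite inE => hl; apply: funext => x; exact: (chi_f HA hgen hl).
  + exact: (Psi_cont HA hgen).
Qed.
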